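(* For every $k,s\in\mathbb{N}$, $$\mathbf{E}\bigl|V_G^s(k)\setminus V_X^s(k)\bigr|\le 4\,s\,k^2/(n-1).$$
   Context: Let $V=\{1,\dots,n\}$, $T_1,T_2,\dots$ i.i.d. uniformly random transpositions of $V$, and $\pi_s=T_s\circ\cdots\circ T_1$. Let $G^s$ be the graph on $V$ whose edges are the pairs $\{u,v\}$ such that $(u,v)$ appears among $T_1,\dots,T_s$. $V_G^s(k)\subset V$ denotes the union of the connected components of $G^s$ with at least $k$ vertices, and $V_X^s(k)\subset V$ denotes the union of the cycles of $\pi_s$ with at least $k$ elements. *)

(* Defs.v *)
From HB Require Import structures.
From mathcomp Require Import all_boot all_order all_algebra all_fingroup.
Set Implicit Arguments. Unset Strict Implicit. Unset Printing Implicit Defensive.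
Import GRing.Theory Num.Theory.

Definition transpositions (n : nat) : {set {perm 'I_n}} :=
  [set p : {perm 'I_n} | [exists x, exists y, (x != y) && (p == tperm x y)]].

(* pi_s = T_s o ... o T_1 ; in mathcomp (p * q) x = q (p x). *)
Definition pi_s (n s : nat) (T : {ffun 'I_s -> {perm 'I_n}}) : {perm 'I_n} :=
  (\prod_(i < s) T i)%g.

Definition Gedge (n s : nat) (T : {ffun 'I_s -> {perm 'I_n}}) : rel 'I_n :=
  fun u v => (u != v) && [exists i : 'I_s, T i == tperm u v].

Definition Gcomp (n s : nat) (T : {ffun 'I_s -> {perm 'I_n}}) (u : 'I_n) : {set 'I_n} :=
  [set v | connect (Gedge T) u v].

Definition VG (n s k : nat) (T : {ffun 'I_s -> {perm 'I_n}}) : {set 'I_n} :=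
  [set u | k <= #|Gcomp T u|].

Definition VX (n s k : nat) (T : {ffun 'I_s -> {perm 'I_n}}) : {set 'I_n} :=
  [set u | k <= #|porbit (pi_s T) u|].

(* Expectation of |V_G^s(k) \ V_X^s(k)| when T_1..T_s are i.i.d. uniform
   transpositions: average over all s-tuples of transpositions. *)
Definition expected_diff (n s k : nat) : rat :=
  ((\sum_(T : {ffun 'I_s -> {perm 'I_n}} | [forall i, T i \in transpositions n])
      (#|VG k T :\: VX k T|)%:R) / (#|transpositions n| ^ s)%:R)%R.

(* Main.v *)
Require Import Defs.
From HB Require Import structures.
From mathcomp Require Import all_boot all_order all_algebra all_fingroup.
From mathcomp Require Import zify.
From Stdlib Require Import Lia.
Set Implicit Arguments. Unset Strict Implicit. Unset Printing Implicit Defensive.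

Section PermLemmas.
Variable X : finType.
Implicit Types (P : {perm X}) (a b c d x y : X).

Lemma iter_mod (f : X -> X) x j i : iter j f x = x -> iter i f x = iter (i %% j) f x.
Proof.
move=> fj; rewrite {1}(divn_eq i j) addnC iterD; congr iter.
rewrite iterM; elim: (i %/ j) => //= q ->; exact: fj.
Qed.

Lemma mem_porbit_iter P x i : iter i P x \in porbit P x.
Proof. by rewrite -permX mem_porbit. Qed.

Lemma porbit_iterP P x y : reflect (exists i, y = iter i P x) (y \in porbit P x).
Proof.
apply: (iffP (porbitP _ _ _)) => -[i ->]; exists i; by rewrite permX.
Qed.

Lemma core P a b : exists j, [/\ 0 < j, (iter j P a == a) || (iter j P a == b),
  (forall i, 0 < i < j -> (iter i P a != a) && (iter i P a != b)) &
  (forall i, i < j -> iter i (P * tperm a b)%g a = iter i P a)].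
Proof.
have ex : exists j, (0 < j) && ((iter j P a == a) || (iter j P a == b)).
  by exists #|porbit P a|; rewrite lt0n card_porbit_neq0 /= iter_porbit eqxx.
case: (ex_minnP ex) => j /andP[j0 hj] jmin.
have hmin : forall i, 0 < i < j -> (iter i P a != a) && (iter i P a != b).
  move=> i /andP[i0 ij]; rewrite -negb_or; apply/negP => H.
  by have := jmin i; rewrite i0 H => /(_ isT); rewrite leqNgt ij.
exists j; split => //.
elim=> // i IH ij; rewrite !iterS IH ?(ltnW ij) // permM.
by case/andP: (hmin i.+1 ij) => h1 h2; rewrite -iterS tpermD // eq_sym.
Qed.


Lemma dichotomy P a b : a != b ->
  (exists j, [/\ 0 < j, j <= #|porbit (P * tperm a b)%g a| & iter j P a = b])
  \/ [/\ {subset porbit P a <= porbit (P * tperm a b)%g a}, b \notin porbit P a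
       & b \in porbit (P * tperm a b)%g a].
Proof.
move=> ab; have [j [j0 hj hmin heq]] := core P a b.
set P' := (P * tperm a b)%g in heq *.
case/orP: hj => /eqP hj; last first.
  left; exists j; split => //.
  set m := #|_|; rewrite leqNgt; apply/negP => mj.
  have m0 : 0 < m by rewrite lt0n card_porbit_neq0.
  have h := hmin m; rewrite m0 mj in h; case/andP: (h isT) => /eqP h1 _; apply: h1.
  by rewrite -(heq m mj) /m iter_porbit.
right; split.
- move=> y /porbit_iterP[i ->]; rewrite (iter_mod i hj) -heq ?ltn_mod //.
  exact: mem_porbit_iter.
- apply/negP => /porbit_iterP[i hb]; move: hb; rewrite (iter_mod i hj).
  case: (posnP (i %% j)) => [-> /= ba|i0 hb].
    by rewrite ba eqxx in ab.
  by have := hmin (i %% j); rewrite i0 ltn_mod j0 hb eqxx andbF => /(_ isT).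
- have -> : b = iter j P' a.
    case: j j0 hmin heq hj => // j _ hmin heq hj.
    by rewrite iterS heq // permM -iterS hj tpermL.
  exact: mem_porbit_iter.
Qed.


Lemma avoid_porbit P a b x : a \notin porbit (P * tperm a b)%g x ->
  b \notin porbit (P * tperm a b)%g x ->
  porbit (P * tperm a b)%g x = porbit P x.
Proof.
move=> ha hb.
have E : forall i, iter i (P * tperm a b)%g x = iter i P x.
  elim=> // i IH; rewrite iterS IH permM.
  have := mem_porbit_iter (P * tperm a b)%g x i.+1; rewrite iterS IH permM.
  case: (tpermP a b (P (iter i P x))) => [_ h|_ h|//].
  - by rewrite h in hb.
  - by rewrite h in ha.
apply/setP => y; apply/porbit_iterP/porbit_iterP => -[i ->]; exists i; by rewrite E.
Qed.


Definition comp (e : rel X) x : {set X} := [set y | connect e x y].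

Lemma connect_in (e : rel X) (U : {set X}) x y : x \in U ->
  (forall u v, u \in U -> e u v -> v \in U) -> connect e x y -> y \in U.
Proof.
move=> xU cl /connectP[p pp ->]; elim: p x xU pp => //= z p IH x xU /andP[exz pz].
exact: IH (cl _ _ xU exz) pz.
Qed.

Lemma comp_eq (e : rel X) x y : symmetric e -> y \in comp e x -> comp e y = comp e x.
Proof.
move=> es; rewrite inE => xy; apply/setP => z; rewrite !inE.
apply/idP/idP => h; first exact: connect_trans xy h.
by apply: connect_trans _ h; rewrite (sym_connect_sym es).
Qed.

Section Step.
Variables (P : {perm X}) (a b : X) (e e' : rel X) (k : nat) (M M' : {set X}).
Hypothesis ab : a != b.
Hypothesis esym : symmetric e.
Hypothesis e'sym : symmetric e'.
Hypothesis ee' : forall u v, e u v -> e' u v.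
Hypothesis e'ab : e' a b.
Hypothesis e'e : forall u v, e' u v -> [|| e u v, (u == a) && (v == b) | (u == b) && (v == a)].
Hypothesis MM : M \subset M'.
Hypothesis FM : forall c d, tperm a b = tperm c d -> c != d ->
  (exists j, 0 < j < k /\ iter j P c = d) -> c \in M'.
Hypothesis H1 : forall x, porbit P x \subset comp e x.
Hypothesis H2 : forall x, #|porbit P x| < k -> porbit P x != comp e x ->
  exists2 m, m \in M & m \in porbit P x.

Let P' := (P * tperm a b)%g.

Lemma step1 x : porbit P' x \subset comp e' x.
Proof.
apply/subsetP => y /porbit_iterP[i ->]; rewrite inE.
elim: i => [|i IH]; first exact: connect0.
apply: connect_trans IH _; rewrite iterS; set z := iter i P' x.
rewrite permM; apply: (@connect_trans _ _ (P z)).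
  have := subsetP (H1 z) (P z) (mem_porbit_iter P z 1); rewrite inE.
  by apply: connect_sub => u v /ee' /connect1.
case: tpermP => [->|->|_ _]; last exact: connect0.
  exact: connect1.
by apply: connect1; rewrite e'sym.
Qed.

Lemma comp_sub x : comp e x \subset comp e' x.
Proof.
apply/subsetP => y; rewrite !inE; apply: connect_sub => u v /ee' /connect1 //.
Qed.

Lemma step2 x : #|porbit P' x| < k -> porbit P' x != comp e' x ->
  exists2 m, m \in M' & m \in porbit P' x.
Proof.
move=> small bad.
have key : forall c d, tperm a b = tperm c d -> c != d ->
    (forall u v, e' u v -> [|| e u v, (u == c) && (v == d) | (u == d) && (v == c)]) ->
    c \in porbit P' x -> exists2 m, m \in M' & m \in porbit P' x.
  move=> c d tab cd e'e2 cx.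
  have pc : porbit P' c = porbit P' x by apply/eqP; rewrite eq_porbit_mem.
  have P'E : P' = (P * tperm c d)%g by rewrite /P' tab.
  case: (dichotomy P cd) => [[j [j0 jle hj]]|[sc dnc dc]].
    exists c; last by [].
    apply: FM cd _ => //; exists j; split => //.
    by rewrite j0 /= (leq_trans _ small) // ltnS -pc P'E.
  rewrite -P'E in sc dc.
  have sd : {subset porbit P d <= porbit P' c}.
    have dc' : d != c by rewrite eq_sym.
    case: (@dichotomy P d c dc') => [[j [j0 jle hj]]|[sd _ _]].
    - by move: dnc; rewrite porbit_sym -hj mem_porbit_iter.
    - move=> y /sd; rewrite tpermC -P'E => yd.
      by have := dc; rewrite -eq_porbit_mem => /eqP <-.
  have cardc : #|porbit P c| < k.
    by rewrite (leq_trans _ small) // ltnS -pc subset_leq_card //; apply/subsetP.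
  have cardd : #|porbit P d| < k.
    by rewrite (leq_trans _ small) // ltnS -pc subset_leq_card //; apply/subsetP.
  have [gc|bc] := eqVneq (porbit P c) (comp e c); last first.
    have [m mM mc] := H2 cardc bc.
    by exists m; [exact: (subsetP MM) | rewrite -pc; exact: sc].
  have [gd|bd] := eqVneq (porbit P d) (comp e d); last first.
    have [m mM mc] := H2 cardd bd.
    by exists m; [exact: (subsetP MM) | rewrite -pc; exact: sd].
  exfalso; move/negP: bad; apply.
  have xc : x \in comp e' c by apply: (subsetP (step1 c)); rewrite -eq_porbit_mem pc.
  rewrite -pc (comp_eq e'sym xc) eqEsubset step1 /=.
  apply/subsetP => y; rewrite inE => hy.
  suff : y \in comp e c :|: comp e d by rewrite inE -gc -gd => /orP[/sc|/sd].
  apply: (connect_in _ _ hy).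
  - by rewrite !inE connect0.
  - move=> u v; rewrite !inE => hu /e'e2 /or3P[huv|/andP[_ /eqP->]|/andP[_ /eqP->]].
    + by case/orP: hu => h; apply/orP; [left|right]; apply: connect_trans h (connect1 huv).
    + by rewrite connect0 orbT.
    + by rewrite connect0.
have [ax|nax] := boolP (a \in porbit P' x).
  by apply: (key a b) => //; move=> u v; exact: e'e.
have [bx|nbx] := boolP (b \in porbit P' x).
  apply: (key b a) => //; first by rewrite tpermC.
    by rewrite eq_sym.
  by move=> u v /e'e /or3P[->|->|->]; rewrite ?orbT.
have E := avoid_porbit nax nbx; rewrite -/P' in E.
rewrite E in small bad nax nbx *.
have [g|bx] := eqVneq (porbit P x) (comp e x); last first.
  by have [m mM mx] := H2 small bx; exists m => //; exact: (subsetP MM).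
exfalso; move/negP: bad; apply; rewrite g eqEsubset comp_sub /=.
apply/subsetP => y; rewrite inE => hy; apply: (connect_in _ _ hy).
  by rewrite inE connect0.
move=> u v hu /e'e /or3P[huv|/andP[/eqP ua _]|/andP[/eqP ub _]].
- by move: hu; rewrite /comp !in_set => hu; apply: connect_trans hu (connect1 huv).
- by move: nax; rewrite g -ua hu.
- by move: nbx; rewrite g -ub hu.
Qed.

End Step.

End PermLemmas.


Lemma card_bigcup_le (I X : finType) (P : pred I) (F : I -> {set X}) :
  #|\bigcup_(i | P i) F i| <= \sum_(i | P i) #|F i|.
Proof.
elim/big_rec2: _ => [|i A m _ IH]; first by rewrite cards0.
by rewrite (leq_trans (leq_card_setU _ _).1) // leq_add2l.
Qed.

Lemma tperm_eq_cases (X : finType) (a b u v : X) : tperm a b = tperm u v -> u != v ->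
  (u == a) && (v == b) || (u == b) && (v == a).
Proof.
move=> h uv; have := congr1 (fun p : {perm X} => p u) h; rewrite tpermL.
case: tpermP => [ua bv | ub av | _ _ uv'].
- by rewrite ua bv !eqxx.
- by rewrite ub av !eqxx orbT.
- by rewrite uv' eqxx in uv.
Qed.

Section Traj.
Variables n s k : nat.
Implicit Types T : {ffun 'I_s -> {perm 'I_n}}.

Definition pre t T : {perm 'I_n} := (\prod_(i <- take t (enum 'I_s)) T i)%g.
Definition Gpre t T : rel 'I_n :=
  fun u v => (u != v) && [exists i : 'I_s, (i < t) && (T i == tperm u v)].
Definition Fs (P tau : {perm 'I_n}) : {set 'I_n} :=
  [set x | (tau x != x) && [exists j : 'I_k, (0 < j) && (iter j P x == tau x)]].
Definition Mset t T : {set 'I_n} :=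
  [set x | [exists i : 'I_s, (i < t) && (x \in Fs (pre i T) (T i))]].

Lemma Gpre_sym t T : symmetric (Gpre t T).
Proof. by move=> u v; rewrite /Gpre eq_sym tpermC. Qed.

Lemma pre_step t T (ts : t < s) : pre t.+1 T = (pre t T * T (Ordinal ts))%g.
Proof.
rewrite /pre (take_nth (Ordinal ts)) ?size_enum_ord // big_rcons.
by rewrite (nth_ord_enum _ (Ordinal ts)).
Qed.

Lemma comp0 T x : comp (Gpre 0 T) x = [set x].
Proof.
apply/eqP; rewrite eqEsubset; apply/andP; split; last first.
  by rewrite sub1set inE connect0.
apply/subsetP => y hy; rewrite /comp in_set in hy; apply: (connect_in _ _ hy).
  by rewrite inE.
move=> u v _; rewrite /Gpre => /andP[_ /existsP[i]].
by rewrite ltn0.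
Qed.

Lemma porbit1 x : porbit (1%g : {perm 'I_n}) x = [set x].
Proof.
apply/eqP; rewrite eqEsubset sub1set porbit_id andbT.
apply/subsetP => y /porbit_iterP[i ->]; rewrite inE.
by elim: i => //= i /eqP ->; rewrite perm1.
Qed.

Lemma invariant T : (forall i, T i \in transpositions n) -> forall t, t <= s ->
  (forall x, porbit (pre t T) x \subset comp (Gpre t T) x) /\
  (forall x, #|porbit (pre t T) x| < k -> porbit (pre t T) x != comp (Gpre t T) x ->
     exists2 m, m \in Mset t T & m \in porbit (pre t T) x).
Proof.
move=> HT; elim=> [_|t IH ts].
  have pre0 : pre 0 T = 1%g by rewrite /pre take0 big_nil.
  rewrite pre0; split => x; rewrite porbit1 comp0 ?eqxx //.
have [H1 H2] := IH (ltnW ts).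
set i0 := Ordinal ts.
have := HT i0; rewrite inE => /existsP[a /existsP[b /andP[ab /eqP Ti0]]].
rewrite pre_step Ti0.
have e'e : forall u v, Gpre t.+1 T u v ->
    [|| Gpre t T u v, (u == a) && (v == b) | (u == b) && (v == a)].
  move=> u v /andP[uv /existsP[i /andP[it /eqP Ti]]].
  case: (ltngtP i t) => [lt|gt|eq].
  - by rewrite /Gpre uv /=; apply/orP; left; apply/existsP; exists i; rewrite lt Ti eqxx.
  - by rewrite ltnS leqNgt gt in it.
  - have ei : i = i0 by apply: val_inj.
    have h : tperm a b = tperm u v by rewrite -Ti0 -ei.
    by rewrite (tperm_eq_cases h uv) orbT.
have ee' : forall u v, Gpre t T u v -> Gpre t.+1 T u v.
  move=> u v /andP[uv /existsP[i /andP[it hi]]].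
  by rewrite /Gpre uv; apply/existsP; exists i; rewrite hi ltnS (ltnW it).
have e'ab : Gpre t.+1 T a b.
  by rewrite /Gpre ab; apply/existsP; exists i0; rewrite /= ltnSn Ti0 eqxx.
have H1' := step1 (Gpre_sym t.+1 T) ee' e'ab H1.
split => // x; apply: (step2 ab (Gpre_sym t.+1 T) ee' e'ab e'e _ _ H1 H2).
  apply/subsetP => y; rewrite !inE => /existsP[i /andP[it hi]].
  by apply/existsP; exists i; rewrite hi ltnS (ltnW it).
move=> c d tab cd [j [/andP[j0 jk] hj]].
rewrite inE; apply/existsP; exists i0; rewrite /= ltnSn /= inE Ti0 tab tpermL eq_sym cd /=.
by apply/existsP; exists (Ordinal jk); rewrite /= j0 hj eqxx.
Qed.

Lemma pre_s T : pre s T = pi_s T.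
Proof.
by rewrite /pre /pi_s take_oversize ?size_enum_ord // [index_enum _]unlock -enumT.
Qed.

Lemma Gpre_s T u : comp (Gpre s T) u = Gcomp T u.
Proof.
apply/setP => v; rewrite /comp /Gcomp !in_set; apply: eq_connect => x y.
by rewrite /Gpre /Gedge; congr andb; apply: eq_existsb => i; rewrite ltn_ord.
Qed.

Lemma det_bound T : (forall i, T i \in transpositions n) ->
  #|VG k T :\: VX k T| <= k.-1 * \sum_(i < s) #|Fs (pre i T) (T i)|.
Proof.
move=> HT; have [_ H2] := invariant HT (leqnn s).
rewrite pre_s in H2.
set pi := pi_s T.
pose F m := if #|porbit pi m| < k then porbit pi m else set0.
have sub : VG k T :\: VX k T \subset \bigcup_(m in Mset s T) F m.
  apply/subsetP => u; rewrite !inE -ltnNge => /andP[small big].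
  have bad : porbit pi u != comp (Gpre s T) u.
    apply/negP => /eqP e; move: big; rewrite -Gpre_s -e.
    by rewrite leqNgt small.
  have [m mM mu] := H2 u small bad.
  apply/bigcupP; exists m => //.
  have pm : porbit pi m = porbit pi u by apply/eqP; rewrite eq_porbit_mem.
  by rewrite /F pm small porbit_id.
apply: (leq_trans (subset_leq_card sub)); apply: (leq_trans (card_bigcup_le _ _)).
apply: (@leq_trans (\sum_(m in Mset s T) k.-1)).
  apply: leq_sum => m _; rewrite /F; case: ifP => h; last by rewrite cards0.
  by rewrite -ltnS (ltn_predK h).
rewrite sum_nat_const mulnC leq_mul2l; apply/orP; right.
have subM : Mset s T \subset \bigcup_(i < s) Fs (pre i T) (T i).
  apply/subsetP => x; rewrite inE => /existsP[i /andP[_ hi]].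
  by apply/bigcupP; exists i.
exact: (leq_trans (subset_leq_card subM) (card_bigcup_le _ _)).
Qed.

Lemma trans_eq (tau : {perm 'I_n}) x : tau \in transpositions n -> tau x != x ->
  tau = tperm x (tau x).
Proof.
rewrite inE => /existsP[a /existsP[b /andP[ab /eqP ->]]].
case: (tpermP a b x) => [->|->|xa xb].
- by [].
- by rewrite tpermC.
- by rewrite eqxx.
Qed.

Lemma card_nat (X : finType) (A : {set X}) : #|A| = \sum_x (x \in A : nat).
Proof. by rewrite -sum1_card big_mkcond. Qed.

Lemma count_F (P : {perm 'I_n}) :
  \sum_(tau in transpositions n) #|Fs P tau| <= n * k.-1.
Proof.
under eq_bigr do rewrite card_nat.
rewrite exchange_big /= -[n in n * _]card_ord -sum_nat_const.
apply: leq_sum => x _.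
rewrite -big_mkcondr /= sum1_card.
pose Y := [set iter j.+1 P x | j : 'I_k.-1].
apply: (@leq_trans #|Y|); last by rewrite (leq_trans (leq_imset_card _ _)) ?card_ord.
rewrite -(@card_in_imset _ _ (fun tau : {perm 'I_n} => tau x)).
  apply: subset_leq_card; apply/subsetP => y /imsetP[tau].
  rewrite unfold_in => /andP[_]; rewrite inE => /andP[_ /existsP[[[|j] jlt] /andP[//= _ /eqP hj]]] ->.
  apply/imsetP; rewrite -hj.
  have jk : j < k.-1 by move: jlt; clear; lia.
  by exists (Ordinal jk).
move=> t1 t2 /andP[h1 m1] /andP[h2 m2] e; move: m1 m2; rewrite !inE => /andP[m1 _] /andP[m2 _].
by rewrite (trans_eq h1 m1) (trans_eq h2 m2) e.
Qed.

Definition upd T (i : 'I_s) (tau : {perm 'I_n}) : {ffun 'I_s -> {perm 'I_n}} :=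
  [ffun j => if j == i then tau else T j].

Lemma mem_take_enum (i j : 'I_s) : j \in take i (enum 'I_s) -> j < i.
Proof.
move=> h; have : val j \in map val (take i (enum 'I_s)) by apply: map_f.
rewrite map_take val_enum_ord take_iota mem_iota add0n => /andP[_ h'].
exact: (leq_trans h' (geq_minl _ _)).
Qed.

Lemma pre_upd T (i : 'I_s) tau : pre i (upd T i tau) = pre i T.
Proof.
apply: eq_big_seq => j /mem_take_enum ji; rewrite ffunE.
by case: eqP => // e; rewrite e ltnn in ji.
Qed.

Lemma sum_F (i : 'I_s) :
  (\sum_(T : {ffun 'I_s -> {perm 'I_n}} | [forall j, T j \in transpositions n]) #|Fs (pre i T) (T i)|) * #|transpositions n|
  <= #|[set T : {ffun 'I_s -> {perm 'I_n}} | [forall j, T j \in transpositions n]]| * (n * k.-1).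
Proof.
set Tr := transpositions n.
rewrite mulnC big_distrr /=.
under eq_bigr do rewrite -[#|Tr|]sum1_card big_distrl /= mul1n.
rewrite pair_big_dep /=.
pose phi (p : {ffun 'I_s -> {perm 'I_n}} * {perm 'I_n}) := (upd p.1 i p.2, p.1 i).
have phiK : cancel phi phi.
  case=> T tau; rewrite /phi /= ffunE eqxx; congr pair.
  by apply/ffunP => j; rewrite !ffunE; case: eqP => // ->.
rewrite (reindex_inj (can_inj phiK)) /=.
have QE : forall T tau, [forall j, upd T i tau j \in Tr] && (T i \in Tr) =
    [forall j, T j \in Tr] && (tau \in Tr).
  move=> T tau; apply/andP/andP => -[/forallP h1 h2]; split.
  - apply/forallP => j; have := h1 j; rewrite ffunE; case: eqP => [-> _|//]; exact: h2.
  - by have := h1 i; rewrite ffunE eqxx.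
  - apply/forallP => j; rewrite ffunE; case: eqP => _; [exact: h2 | exact: h1].
  - exact: h1.
under eq_bigl do rewrite QE.
under eq_bigr do rewrite pre_upd ffunE eqxx.
rewrite -(pair_big_dep (fun T : {ffun 'I_s -> {perm 'I_n}} => [forall j, T j \in Tr]) (fun _ tau => tau \in Tr) (fun T tau => #|Fs (pre i T) tau|)) /= -sum1_card big_distrl /=.
rewrite [X in _ <= X](eq_bigl (fun T => [forall j, T j \in Tr])); last by move=> T; rewrite inE.
apply: leq_sum => T _; rewrite mul1n; exact: count_F.
Qed.

End Traj.

Import GRing.Theory Num.Theory.

Lemma card_Tr_lb n : n * n.-1 <= 2 * #|transpositions n|.
Proof.
pose S2 := [set p : 'I_n * 'I_n | p.1 != p.2].
have cS : #|S2| = n * n.-1.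
  rewrite card_nat.
  rewrite (eq_bigr (fun p : 'I_n * 'I_n => ((p.1 != p.2) : nat))); last first.
    by move=> p _; rewrite inE.
  rewrite -(pair_big xpredT xpredT (fun x y : 'I_n => ((x != y) : nat))) /=.
  rewrite -[n in n * _]card_ord -sum_nat_const; apply: eq_bigr => x _.
  rewrite -big_mkcondr /= sum1_card; transitivity #|predC1 x|.
    by apply: eq_card => y; rewrite !inE eq_sym.
  by rewrite cardC1 card_ord.
rewrite -cS.
pose g (p : 'I_n * 'I_n) := (tperm p.1 p.2, p.1 < p.2).
rewrite -(@card_in_imset _ _ g).
  rewrite mulnC (_ : 2 = #|[set: bool]|); last by rewrite cardsT card_bool.
  rewrite -cardsX.
  apply: subset_leq_card; apply/subsetP => q /imsetP[[x y]]; rewrite inE /= => xy ->.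
  rewrite !inE /= andbT; apply/existsP; exists x; apply/existsP; exists y.
  by rewrite xy eqxx.
move=> [x y] [x' y']; rewrite !inE /= => xy x'y' [e].
case/orP: (tperm_eq_cases e x'y') => /andP[/eqP -> /eqP ->] // lt.
exfalso; move: lt xy; clear; case: ltngtP => // e _ /eqP[]; exact: val_inj.
Qed.

Theorem lemma2p2 (n k s : nat) (hn : (2 <= n)%N) :
  (expected_diff n s k <= 4%:R * s%:R * (k ^ 2)%:R / (n - 1)%:R)%R.
Proof.
set Tr := transpositions n.
set D := [set T : {ffun 'I_s -> {perm 'I_n}} | [forall j, T j \in Tr]].
have cD : #|D| = #|Tr| ^ s.
  rewrite -[s in _ ^ s]card_ord -card_ffun_on; apply: eq_card => T.
  by rewrite inE; apply/forallP/ffun_onP.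
set Sd := \sum_(T : {ffun 'I_s -> {perm 'I_n}} | [forall i, T i \in Tr]) #|VG k T :\: VX k T|.
have h1 : Sd <= k.-1 * \sum_(i < s) \sum_(T : {ffun 'I_s -> {perm 'I_n}} | [forall j, T j \in Tr])
              #|Fs k (pre i T) (T i)|.
  rewrite exchange_big /= big_distrr /=.
  apply: leq_sum => T /forallP HT; exact: det_bound.
have h2 : Sd * #|Tr| <= k.-1 * (s * (#|D| * (n * k.-1))).
  apply: (leq_trans (leq_mul h1 (leqnn #|Tr|))); rewrite -mulnA leq_mul2l; apply/orP; right.
  rewrite big_distrl /= -[s in s * _]card_ord -sum_nat_const; apply: leq_sum => i _.
  exact: sum_F.
have h3 := card_Tr_lb n.
have Tr0 : 0 < #|Tr|.
  by rewrite lt0n; apply/eqP => e; move: h3; rewrite e; clear -hn; nia.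
have h4 : Sd * (n - 1) <= 4 * s * k ^ 2 * #|D|.
  set K := k.-1 * k.-1 * s * #|D|.
  have e1 : Sd * (n - 1) * #|Tr| <= k.-1 * (s * (#|D| * (n * k.-1))) * (n - 1).
    by rewrite mulnAC leq_mul2r h2 orbT.
  have e2 : k.-1 * (s * (#|D| * (n * k.-1))) * (n - 1) = K * (n * n.-1).
    by rewrite /K subn1; clear; nia.
  have e3 : K * (n * n.-1) <= K * (2 * #|Tr|).
    by rewrite leq_mul2l h3 orbT.
  have e4 : Sd * (n - 1) <= 2 * K.
    rewrite -(leq_pmul2r Tr0) (leq_trans e1) // e2 (leq_trans e3) //.
    by rewrite mulnA [K * 2]mulnC.
  apply: (leq_trans e4); rewrite /K.
  have kk : k.-1 <= k by apply: leq_pred.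
  clear -kk; nia.
have D0 : 0 < #|D| by rewrite cD expn_gt0 Tr0.
rewrite /expected_diff -/Tr -natr_sum -cD -/Sd.
rewrite ler_pdivrMr ?ltr0n // mulrAC ler_pdivlMr ?ltr0n ?subn_gt0 // -!natrM ler_nat.
exact: h4.
Qed.
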